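(* Let $(\mathcal{P},d)$ be a 1-2-metric and $\alpha>0$. A strategy profile of the greedy-routing network creation game on $(\mathcal{P},d)$ with edge price $\alpha$ is a Nash equilibrium if and only if its network is a Balanced Domination Set Graph for $\alpha$ (BDSG$(\alpha)$).
   Context: A 1-2-metric is a finite metric space $(\mathcal{P},d)$ with $d(u,v)\in\{1,2\}$ for all distinct $u,v$. Game: agents are the points of $\mathcal{P}$; agent $u$'s strategy is $S_u\subseteq\mathcal{P}\setminus\{u\}$; a profile $\mathbf{s}$ defines the directed network $G(\mathbf{s})$ with arcs $(u,v)$, $v\in S_u$, of length $d(u,v)$. A greedy path from $u$ to $v$ is a directed path $u=x_1,\dots,x_j=v$ of arcs with $d(x_i,v)>d(x_{i+1},v)$ for all $i$. $\mathrm{stretch}(u,v)$ is the minimum length of a greedy path from $u$ to $v$ divided by $d(u,v)$, or a fixed sufficiently large penalty constant $Z$ if none exists. Cost: $c_u(\mathbf{s})=\sum_{v\ne u}\mathrm{stretch}_{G(\mathbf{s})}(u,v)+\alpha|S_u|$. A Nash equilibrium is a profile in which no agent can strictly decrease its cost by changing its own strategy. Notation for a directed network $G$ on $\mathcal{P}$ and node $u$: $N(u)$ is the set of out-neighbours of $u$; $W_2(u)=\{v\in N(u):d(u,v)=2\}$; $W_{1\to1}(u)$ is the set of nodes $w\ne u$ such that there is $v$ with $d(u,v)=d(v,w)=1$ and $(u,v),(v,w)$ arcs of $G$; $W_2^+(u)=W_2(u)\cap W_{1\to1}(u)$. $G^1_{-u}$ is the directed graph on $\mathcal{P}\setminus\{u\}$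 with arc $(v,w)$ for every pair with $d(v,w)=1$. A vertex set $D$ of a directed graph $H$ is dominating if every vertex of $H$ outside $D$ has an in-neighbour in $D$. A Domination Set Graph (DSG) is a directed network $G$ on $\mathcal{P}$ such that (i) $G$ contains every arc $(v,w)$ with $d(v,w)=1$; (ii) for every $u$, $N(u)$ is dominating in $G^1_{-u}$; (iii) for every $u$ there is no set $N'\subseteq\mathcal{P}\setminus\{u\}$ obtained from $N(u)$ by deleting one element or replacing one element by another, such that $N'$ contains all $v$ with $d(u,v)=1$, $N'$ is dominating in $G^1_{-u}$, and $|\{v\in N':d(u,v)=2\}\cap W_{1\to1}(u)|<|W_2^+(u)|$. A BDSG$(\alpha)$ is a DSG in which, for every node $u$, the quantity $(\alpha-\tfrac12)|W_2(u)|+\tfrac12|W_2^+(u)|$ is minimum among all choices of an out-neighbourhood $N'\subseteq\mathcal{P}\setminus\{u\}$ of $u$ (all other arcs unchanged) that contain every $v$ with $d(u,v)=1$ and are dominating in $G^1_{-u}$ (the sets $W_2,W_2^+$ being computed with respect to $N'$). *)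

(* Defs.v *)
From mathcomp Require Import all_boot all_order all_algebra.
Set Implicit Arguments. Unset Strict Implicit. Unset Printing Implicit Defensive.
Import Order.TTheory GRing.Theory Num.Theory.

Section Defs.
Variable T : finType.
Variable d : T -> T -> nat.

Definition one_two_metric : Prop :=
  [/\ forall u, d u u = 0,
      forall u v, d u v = d v u,
      forall u v w, d u w <= d u v + d v w
    & forall u v, u != v -> (d u v == 1) || (d u v == 2)].

(** A network is given by out-neighbourhoods: arc (u,v) iff v \in N u. *)
(** Greedy path from u to v given as the list of nodes after u. *)
Definition greedy_path (N : T -> {set T}) (u v : T) (p : seq T) : bool :=
  path (fun x y => (y \in N x) && (d y v < d x v)) u p && (last u p == v).

Definition path_len (u : T) (p : seq T) : nat := sumn (pairmap d u p).

(** Greedy paths visit pairwise distinct nodes (distance to v strictly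
    decreases), hence have fewer than #|T| arcs; we quantify over them. *)
Definition has_greedy_len (N : T -> {set T}) (u v : T) (l : nat) : bool :=
  [exists k : 'I_#|T|.+1, [exists t : k.-tuple T,
     greedy_path N u v t && (path_len u t == l)]].

(** ascending list of lengths of greedy paths (each arc has length <= 2) *)
Definition greedy_lengths (N : T -> {set T}) (u v : T) : seq nat :=
  [seq l <- iota 0 (2 * #|T|).+1 | has_greedy_len N u v l].

Variable R : realFieldType.

Definition stretch (Z : R) (N : T -> {set T}) (u v : T) : R :=
  match greedy_lengths N u v with
  | [::] => Z
  | l :: _ => (l%:R / (d u v)%:R)%R
  end.

Definition cost (alpha Z : R) (s : T -> {set T}) (u : T) : R :=
  ((\sum_(v | v != u) stretch Z s u v) + alpha * (#|s u|)%:R)%R.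

Definition update (s : T -> {set T}) (u : T) (S : {set T}) : T -> {set T} :=
  fun w => if w == u then S else s w.

Definition is_profile (s : T -> {set T}) : Prop := forall u, u \notin s u.

Definition nash_eq (alpha Z : R) (s : T -> {set T}) : Prop :=
  forall u (S : {set T}), u \notin S ->
    (cost alpha Z s u <= cost alpha Z (update s u S) u)%R.

Definition W2 (N : T -> {set T}) (u : T) : {set T} :=
  [set v in N u | d u v == 2].

Definition W11 (N : T -> {set T}) (u : T) : {set T} :=
  [set w | (w != u) &&
     [exists v, [&& d u v == 1, d v w == 1, v \in N u & w \in N v]]].

Definition W2plus (N : T -> {set T}) (u : T) : {set T} := W2 N u :&: W11 N u.

Definition dominating_minus (u : T) (D : {set T}) : bool :=
  [forall w, ((w != u) && (w \notin D)) ==>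
     [exists v, [&& v \in D, v != u & d v w == 1]]].

Definition admissible (u : T) (N' : {set T}) : bool :=
  [&& u \notin N', [forall v, (d u v == 1) ==> (v \in N')] & dominating_minus u N'].

Definition one_change (A N' : {set T}) : Prop :=
  exists2 x, x \in A & (N' = A :\ x \/ exists y, N' = y |: (A :\ x)).

Definition DSG (N : T -> {set T}) : Prop :=
  [/\ forall v w, d v w = 1 -> w \in N v,
      forall u, dominating_minus u (N u)
    & forall u (N' : {set T}), one_change (N u) N' -> admissible u N' ->
        ~ (#|[set v in N' | d u v == 2] :&: W11 N u| < #|W2plus N u|)%N].

Definition balance (alpha : R) (N : T -> {set T}) (u : T) : R :=
  ((alpha - 2^-1) * (#|W2 N u|)%:R + 2^-1 * (#|W2plus N u|)%:R)%R.

Definition BDSG (alpha : R) (N : T -> {set T}) : Prop :=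
  DSG N /\
  forall u (N' : {set T}), admissible u N' ->
    (balance alpha N u <= balance alpha (update N u N') u)%R.

End Defs.

(* Main.v *)
Require Import Defs.
From mathcomp Require Import all_boot all_order all_algebra.
From mathcomp Require Import zify ring lra.
Import Order.TTheory GRing.Theory Num.Theory.
Set Implicit Arguments. Unset Strict Implicit.

Section Basic.
Variables (T : finType) (d : T -> T -> nat).
Hypothesis Hm : one_two_metric d.

Lemma md0 u : d u u = 0. Proof. by case: Hm. Qed.
Lemma msym u v : d u v = d v u. Proof. by case: Hm. Qed.
Lemma m12 u v : u != v -> d u v = 1 \/ d u v = 2.
Proof. case: Hm => _ _ _ H /H /orP[/eqP|/eqP]; auto. Qed.
Lemma mle2 u v : d u v <= 2.
Proof. case: (eqVneq u v) => [->|/m12 [] ->] //; by rewrite md0. Qed.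
Lemma m0E u v : d u v = 0 -> u = v.
Proof. by case: (eqVneq u v) => // /m12 [] ->. Qed.

Lemma gp_shape N u v p : greedy_path d N u v p ->
  [\/ p = [::] /\ u = v,
      p = [:: v] /\ v \in N u
    | exists x, [/\ p = [:: x; v], x \in N u, v \in N x, d x v = 1 & d u v = 2]].
Proof.
rewrite /greedy_path; case: p => [|x [|y [|z q]]] /=.
- by move=> /eqP ->; constructor 1.
- by rewrite andbT => /andP[/andP[xN _] /eqP <-]; constructor 2.
- rewrite andbT => /andP[/andP[/andP[xN hx] /andP[yN hy]] /eqP yv]; subst y.
  rewrite md0 in hy. have := mle2 u v => h2.
  constructor 3; exists x; split => //; lia.
- move=> /andP[/andP[/andP[_ hx] /andP[/andP[_ hy] /andP[/andP[_ hz] _]]] _].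
  have := mle2 u v; lia.
Qed.

Lemma plen1 u v : path_len d u [:: v] = d u v.
Proof. by rewrite /path_len /= addn0. Qed.
Lemma plen2 u x v : path_len d u [:: x; v] = d u x + d x v.
Proof. by rewrite /path_len /= addn0. Qed.

Lemma filter_head (P : pred nat) m n : m < n -> P m -> (forall l, l < m -> ~~ P l) ->
  [seq l <- iota 0 n | P l] = m :: [seq l <- iota m.+1 (n - m.+1) | P l].
Proof.
move=> mn Pm Hl.
have -> : n = m + (1 + (n - m.+1)) by lia.
rewrite iotaD filter_cat iotaD /= Pm.
have -> : [seq l <- iota 0 m | P l] = [::].
  apply/eqP; rewrite -[_ == _]negbK -has_filter; apply/hasPn => l.
  by rewrite mem_iota add0n => /andP[_ /Hl].
by rewrite /= add0n addn1; congr (_ :: _); congr (filter _ (iota _ _)); lia.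
Qed.

Variable R : realFieldType.

Lemma stretch_min (Z : R) (N : T -> {set T}) u v p m : greedy_path d N u v p -> size p <= #|T| ->
  path_len d u p = m -> m <= 2 * #|T| ->
  (forall q, greedy_path d N u v q -> m <= path_len d u q) ->
  stretch d Z N u v = (m%:R / (d u v)%:R)%R.
Proof.
move=> gp sz pl m2 Hq.
have hP : has_greedy_len d N u v m.
  apply/existsP; exists (Ordinal (n:=#|T|.+1) (m:=size p) (sz : size p < #|T|.+1)).
  apply/existsP; exists (in_tuple p); by rewrite /= gp pl eqxx.
have hl : forall l, l < m -> ~~ has_greedy_len d N u v l.
  move=> l lm; apply/negP => /existsP[k /existsP[t /andP[g /eqP pl']]].
  have := Hq _ g; lia.
have mn : m < (2 * #|T|).+1 by lia.
by rewrite /stretch /greedy_lengths (@filter_head _ _ _ mn hP hl).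
Qed.

Lemma stretch_none (Z : R) (N : T -> {set T}) u v : (forall q, ~~ greedy_path d N u v q) ->
  stretch d Z N u v = Z.
Proof.
move=> H; rewrite /stretch /greedy_lengths.
have -> : [seq l <- iota 0 (2 * #|T|).+1 | has_greedy_len d N u v l] = [::] => //.
apply/eqP; rewrite -[_ == _]negbK -has_filter; apply/hasPn => l _.
apply/negP => /existsP[k /existsP[t /andP[g _]]]; by move: (H t); rewrite g.
Qed.


Lemma T2 (u v : T) : u != v -> 2 <= #|T|.
Proof. move=> uv; have := max_card [set u; v]; by rewrite cards2 uv. Qed.

Lemma gp_len_ge N u v q : greedy_path d N u v q -> u != v -> d u v <= path_len d u q.
Proof.
move=> /gp_shape [[-> e]|[-> _]|[x [-> _ _ h1 h2]]] uv.
- by rewrite e eqxx in uv.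
- by rewrite plen1.
- rewrite plen2 h1 h2; case: (eqVneq u x) => [ex|ux].
    by rewrite -ex h2 in h1.
  case: (m12 ux) => ->; lia.
Qed.

Lemma stretch_direct (Z : R) (N : T -> {set T}) u v : u != v -> v \in N u -> stretch d Z N u v = 1%R.
Proof.
move=> uv vN.
have dn0 : d u v != 0 by apply/eqP => /m0E e; rewrite e eqxx in uv.
rewrite (@stretch_min Z N u v [:: v] (d u v)).
- by rewrite divff // pnatr_eq0.
- by rewrite /greedy_path /= vN md0 eqxx /= !andbT lt0n.
- have := T2 uv; rewrite /=; lia.
- by rewrite plen1.
- have := T2 uv; have := mle2 u v; lia.
- by move=> q /gp_len_ge; apply.
Qed.

Lemma stretch_via (Z : R) (N : T -> {set T}) u x v : u != v -> d u v = 2 -> x \in N u -> d u x = 1 ->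
  d x v = 1 -> v \in N x -> stretch d Z N u v = 1%R.
Proof.
move=> uv h2 xN h1 hx vN.
rewrite (@stretch_min Z N u v [:: x; v] 2).
- by rewrite h2 divff // pnatr_eq0.
- by rewrite /greedy_path /= xN vN hx h2 md0 /= eqxx.
- have := T2 uv; rewrite /=; lia.
- by rewrite plen2 h1 hx.
- have := T2 uv; lia.
- by move=> q /gp_len_ge; rewrite h2; apply.
Qed.

Lemma stretch_32 (Z : R) (N : T -> {set T}) u x v : u != v -> d u v = 2 -> v \notin N u ->
  x \in N u -> d x v = 1 -> v \in N x ->
  (forall y, y \in N u -> d y v = 1 -> v \in N y -> d u y = 2) ->
  stretch d Z N u v = (3%:R / 2%:R)%R.
Proof.
move=> uv h2 vN xN hx vx Hy.
rewrite (@stretch_min Z N u v [:: x; v] 3).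
- by rewrite h2.
- by rewrite /greedy_path /= xN vx hx h2 md0 /= eqxx.
- have := T2 uv; rewrite /=; lia.
- by rewrite plen2 (Hy x) // hx.
- have := T2 uv; lia.
- move=> q /gp_shape [[_ e]|[_ vN']|[y [-> yN vy hy _]]].
  + by rewrite e eqxx in uv.
  + by rewrite vN' in vN.
  + by rewrite plen2 (Hy y) // hy.
Qed.

Lemma stretch_Z1 (Z : R) (N : T -> {set T}) u v : d u v = 1 -> v \notin N u -> stretch d Z N u v = Z.
Proof.
move=> h1 vN; apply: stretch_none => q; apply/negP.
move=> /gp_shape [[_ e]|[_ vN']|[y [_ _ _ _ h2]]].
- by rewrite e md0 in h1.
- by rewrite vN' in vN.
- by rewrite h2 in h1.
Qed.

Lemma stretch_Z2 (Z : R) (N : T -> {set T}) u v : d u v = 2 -> v \notin N u ->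
  (forall x, x \in N u -> d x v = 1 -> v \notin N x) -> stretch d Z N u v = Z.
Proof.
move=> h1 vN Hx; apply: stretch_none => q; apply/negP.
move=> /gp_shape [[_ e]|[_ vN']|[y [_ yN vy hy _]]].
- by rewrite e md0 in h1.
- by rewrite vN' in vN.
- by move: (Hx y yN hy); rewrite vy.
Qed.

Lemma stretch_ge0 (Z : R) (N : T -> {set T}) u v : (0 <= Z)%R -> (0 <= stretch d Z N u v)%R.
Proof.
move=> Z0; rewrite /stretch; case: greedy_lengths => [|l _] //.
by rewrite divr_ge0 ?ler0n.
Qed.

Lemma test32 : (3%:R / 2%:R)%R = (1 + 2^-1 : R)%R.
Proof. lra. Qed.


Definition W11' (u : T) : {set T} :=
  [set w | (w != u) && [exists y, (d u y == 1) && (d y w == 1)]].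
Definition Aset (u : T) : {set T} := [set v | (d u v == 2) && (v \notin W11' u)].
Definition D1 (u : T) : {set T} := [set v | d u v == 1].
Definition H1 (N : T -> {set T}) (u : T) := forall x w, x != u -> d x w = 1 -> w \in N x.

Lemma admP u (N' : {set T}) : admissible d u N' ->
  [/\ u \notin N', forall v, d u v = 1 -> v \in N' &
      forall w, w != u -> w \notin N' -> exists v, [/\ v \in N', v != u & d v w = 1]].
Proof.
move=> /and3P[uN /forallP Hd /forallP Hdom]; split => //.
- by move=> v hv; move: (Hd v); rewrite hv eqxx.
- move=> w wu wN; move: (Hdom w); rewrite wu wN /= => /existsP[v /and3P[a b /eqP c]].
  by exists v.
Qed.

Lemma admN u (N' : {set T}) : u \notin N' -> ~~ admissible d u N' ->
  (exists v, d u v = 1 /\ v \notin N') \/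
  (exists w, [/\ w != u, w \notin N' & forall v, v \in N' -> v != u -> d v w <> 1]).
Proof.
rewrite /admissible => -> /=; case/nandP.
- move=> /forallPn[v]; rewrite negb_imply => /andP[/eqP a b]; left; by exists v.
- move=> /forallPn[w]; rewrite negb_imply => /andP[/andP[a b] /existsPn c]; right.
  exists w; split => // v vN vu e; move: (c v); by rewrite vN vu e eqxx.
Qed.

Lemma W11E (N : T -> {set T}) u : H1 N u -> (forall v, d u v = 1 -> v \in N u) ->
  W11 d N u = W11' u.
Proof.
move=> HN HD; apply/setP => w; rewrite !inE; congr (_ && _).
apply/existsP/existsP => [[y /and4P[a b _ _]]|[y /andP[a b]]]; exists y.
- by rewrite a b.
- rewrite a b /= HD ?(eqP a) //= HN //; last by apply/eqP.
  apply/eqP => e; move: a; by rewrite e md0.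
Qed.

Lemma stretch_val (Z : R) (N : T -> {set T}) u v : H1 N u -> admissible d u (N u) -> u != v ->
  stretch d Z N u v = (1 + 2^-1 * (v \in Aset u :\: N u)%:R)%R.
Proof.
move=> HN /admP [uN HD Hdom] uv.
case: (m12 uv) => h.
- by rewrite (stretch_direct Z uv (HD v h)) !inE h /= andbF mulr0 addr0.
case vN : (v \in N u).
  by rewrite stretch_direct // !inE vN /= mulr0 addr0.
case vW : (v \in W11' u).
  move: (vW); rewrite inE => /andP[_ /existsP[y /andP[/eqP a /eqP b]]].
  have yu : y != u by apply/eqP => e; rewrite e md0 in a.
  rewrite (stretch_via Z uv h (HD y a) a b (HN y v yu b)).
  by rewrite /Aset in_setD in_set vW vN /= andbF mulr0 addr0.
have vu : v != u by rewrite eq_sym.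
case: (Hdom v vu (negbT vN)) => x [xN xu hx].
rewrite (stretch_32 Z uv h (negbT vN) xN hx (HN x v xu hx)).
- by rewrite /Aset in_setD in_set vW vN h eqxx /= mulr1 test32.
- move=> y yN hy _.
  have uy : u != y by apply: contraNneq uN => e; rewrite {1}e.
  case: (m12 uy) => // hy1; move/negP: vW; case.
  rewrite inE vu /=; apply/existsP; exists y; by rewrite hy1 hy eqxx.
Qed.


Lemma sum_ind (X : {set T}) (u : T) : u \notin X ->
  (\sum_(v | v != u) ((v \in X)%:R : R) = #|X|%:R)%R.
Proof.
move=> uX.
rewrite (bigID (mem X)) /= [X in (_ + X)%R]big1 ?addr0; last first.
  by move=> v /andP[_ /negbTE ->].
rewrite -sumr_const; apply: eq_big => [v|v /andP[_ ->]] //.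
by case: (eqVneq v u) => [->|] /=; rewrite ?(negbTE uX) ?andbT.
Qed.

Lemma sum_one (u : T) : (\sum_(v | v != u) (1 : R) = (#|T|.-1)%:R)%R.
Proof.
by rewrite -(cardC1 u) -sumr_const; apply: eq_bigl => v; rewrite inE.
Qed.

Lemma card_N (N' : {set T}) u : admissible d u N' ->
  #|N'| = #|D1 u| + #|[set v in N' | d u v == 2]|.
Proof.
move=> /admP[uN HD _].
rewrite -(cardsID (D1 u) N').
have -> : N' :&: D1 u = D1 u.
  apply/setP => v; rewrite /D1 !inE.
  case h: (d u v == 1); rewrite ?andbF ?andbT //; by rewrite HD ?(eqP h).
have -> : N' :\: D1 u = [set v in N' | d u v == 2] => //.
apply/setP => v; rewrite /D1 !inE.
case: (eqVneq v u) => [->|vu]; first by rewrite (negbTE uN) andbF.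
case: (m12 (vu : v != u)) => h; rewrite msym h //=; by rewrite andbC.
Qed.

Lemma card_A (N : T -> {set T}) u : H1 N u -> (forall v, d u v = 1 -> v \in N u) ->
  #|Aset u :\: N u| + #|W2 d N u| = #|Aset u| + #|W2plus d N u|.
Proof.
move=> HN HD.
rewrite /W2plus (W11E HN HD).
rewrite -(cardsID (N u) (Aset u)) -(cardsID (W11' u) (W2 d N u)).
have -> : Aset u :&: N u = W2 d N u :\: W11' u.
  apply/setP => v; rewrite /Aset /W2 in_setI in_setD !in_set.
  by case: (d u v == 2); case: (v \in N u); rewrite /= ?andbF ?andbT.
lia.
Qed.

Lemma cost_formula (alpha Z : R) (N : T -> {set T}) u : H1 N u -> admissible d u (N u) ->
  cost d alpha Z N u = ((#|T|.-1)%:R + 2^-1 * #|Aset u|%:R + alpha * #|D1 u|%:R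
     + balance d alpha N u)%R.
Proof.
move=> HN Had; have [uN HD _] := admP Had.
rewrite /cost (eq_bigr (fun v => 1 + 2^-1 * (v \in Aset u :\: N u)%:R)%R); last first.
  by move=> v vu; apply: stretch_val; rewrite // eq_sym.
rewrite big_split /= -mulr_sumr sum_one sum_ind; last by rewrite /Aset !inE md0 andbF.
rewrite (card_N Had) /balance.
have := card_A HN HD; move=> /(congr1 (fun n => (n%:R : R)%R)); rewrite !natrD => e.
have -> : (#|Aset u :\: N u|%:R = #|Aset u|%:R + #|W2plus d N u|%:R - #|W2 d N u|%:R :> R)%R.
  by rewrite -e addrK.
rewrite /W2; ring.
Qed.


Lemma H1_update (s : T -> {set T}) u S :
  (forall x w, d x w = 1 -> w \in s x) -> H1 (update s u S) u.
Proof. by move=> H x w xu h; rewrite /update (negbTE xu); apply: H. Qed.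

Lemma stretch_bad (Z : R) (N : T -> {set T}) u : H1 N u -> u \notin N u ->
  ~~ admissible d u (N u) -> exists2 v, v != u & stretch d Z N u v = Z.
Proof.
move=> HN uN /(admN uN) [[v [h vN]]|[w [wu wN Hw]]].
- exists v; first by apply/eqP => e; rewrite e md0 in h.
  exact: stretch_Z1.
- exists w => //.
  have uw : u != w by rewrite eq_sym.
  case: (m12 uw) => h; first exact: stretch_Z1.
  apply: stretch_Z2 => // x xN hx; exfalso; apply: (Hw x xN) => //.
  by apply/eqP => e; move: uN; rewrite -{1}e xN.
Qed.

Lemma cost_geZ (alpha Z : R) (N : T -> {set T}) u v : (0 <= Z)%R -> (0 <= alpha)%R ->
  v != u -> stretch d Z N u v = Z -> (Z <= cost d alpha Z N u)%R.
Proof.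
move=> Z0 a0 vu e; rewrite /cost (bigD1 v) //= e.
have h1 : (0 <= \sum_(i | (i != u) && (i != v)) stretch d Z N u i)%R.
  by apply: sumr_ge0 => i _; apply: stretch_ge0.
have h2 : (0 <= alpha * (#|N u|)%:R)%R by rewrite mulr_ge0 ?ler0n.
lra.
Qed.

Lemma cost_le (alpha Z : R) (N : T -> {set T}) u : (0 <= alpha)%R -> H1 N u ->
  admissible d u (N u) -> (cost d alpha Z N u <= 2 * #|T|%:R + alpha * #|T|%:R)%R.
Proof.
move=> a0 HN Had; rewrite /cost.
have h1 : (\sum_(v | v != u) stretch d Z N u v <= \sum_(v | v != u) (2 : R))%R.
  apply: ler_sum => v vu; rewrite stretch_val // ?(eq_sym u) //.
  by case: (_ \in _); rewrite /= ?mulr1 ?mulr0; lra.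
have h2 : (\sum_(v | v != u) (2 : R) <= 2 * #|T|%:R)%R.
  have -> : (\sum_(v | v != u) (2 : R) = 2 * (#|T|.-1)%:R)%R.
    by rewrite -(sum_one u) mulr_sumr; apply: eq_bigr => *; rewrite mulr1.
  rewrite ler_pM2l ?ler_nat; [lia | lra].
have h3 : (alpha * #|N u|%:R <= alpha * #|T|%:R)%R.
  by rewrite ler_wpM2l // ler_nat max_card.
lra.
Qed.

Lemma cost_full (alpha Z : R) (s : T -> {set T}) u : (0 <= alpha)%R ->
  (cost d alpha Z (update s u [set v | v != u]) u <= #|T|%:R + alpha * #|T|%:R)%R.
Proof.
move=> a0; rewrite /cost.
have h1 : (\sum_(v | v != u) stretch d Z (update s u [set v | v != u]) u v
            <= \sum_(v | v != u) (1 : R))%R.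
  apply: ler_sum => v vu; rewrite stretch_direct ?(eq_sym u) //.
  by rewrite /update eqxx inE.
have h2 : (\sum_(v | v != u) (1 : R) <= #|T|%:R)%R.
  by rewrite sum_one ler_nat; lia.
have h3 : (alpha * #|update s u [set v | v != u] u|%:R <= alpha * #|T|%:R)%R.
  by rewrite ler_wpM2l // ler_nat max_card.
lra.
Qed.

End Basic.

Lemma oc_card (T : finType) (A N' : {set T}) : one_change A N' ->
  #|A| <= #|N'|.+1 /\ #|N'| <= #|A|.
Proof.
case=> x xA [->|[y ->]]; rewrite (cardsD1 x A) xA.
- lia.
- rewrite cardsU1; case: (y \in A :\ x) => /=; lia.
Qed.

Local Open Scope ring_scope.

Theorem theorem2p7 (R : realFieldType) (T : finType) (d : T -> T -> nat)
    (alpha : R) :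
  one_two_metric d -> 0 < alpha ->
  exists Z0 : R, forall Z : R, Z0 <= Z ->
    forall s : T -> {set T}, is_profile s ->
      (nash_eq d alpha Z s <-> BDSG d alpha s).
Proof.
move=> Hm a0.
have a0' : 0 <= alpha by apply: ltW.
exists (2 * #|T|%:R + 1 + alpha * #|T|%:R) => Z HZ s prof.
have hT : 0 <= #|T|%:R :> R by apply: ler0n.
have hA : 0 <= alpha * #|T|%:R by apply: mulr_ge0.
have Z0 : 0 <= Z by lra.
have upd_u : forall u S, update s u S u = S by move=> u S; rewrite /update eqxx.
split.
- move=> Hne.
  have Hbad : forall u v, v != u -> stretch d Z s u v = Z -> False.
    move=> u v vu e.
    have h1 := cost_geZ (alpha:=alpha) Z0 a0' vu e.
    have uF : u \notin [set v | v != u] by rewrite inE eqxx.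
    have h2 := Hne u [set v | v != u] uF.
    have h3 := cost_full Hm Z s u a0'.
    lra.
  have HA : forall x w, d x w = 1%N -> w \in s x.
    move=> x w h; apply/negPn/negP => wN.
    apply: (Hbad x w _ (stretch_Z1 Hm Z h wN)).
    by apply/eqP => e; rewrite e (md0 Hm) in h.
  have H1s : forall u, H1 d s u by move=> u x w _; apply: HA.
  have Had : forall u, admissible d u (s u).
    move=> u; apply/negPn/negP => nad.
    have [v vu e] := stretch_bad Hm Z (H1s u) (prof u) nad.
    exact: (Hbad u v vu e).
  have Hmin : forall u N', admissible d u N' ->
      balance d alpha s u <= balance d alpha (update s u N') u.
    move=> u N' ad'.
    have uN' : u \notin N' by case/and3P: ad'.
    have h := Hne u N' uN'.
    rewrite (cost_formula Hm alpha Z (H1s u) (Had u)) in h.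
    rewrite (cost_formula Hm alpha Z (H1_update N' HA)) ?upd_u // in h.
    lra.
  split => //; split.
  + exact: HA.
  + by move=> u; case/and3P: (Had u).
  + move=> u N' oc ad' lt.
    have hb := Hmin u N' ad'.
    have [_ HD' _] := admP ad'.
    have [_ HD _] := admP (Had u).
    have EW : W11 d (update s u N') u = W11 d s u.
      rewrite (W11E Hm (H1_update N' HA)) ?upd_u //.
      by rewrite (W11E Hm (H1s u)).
    move: hb; rewrite /balance /W2plus EW /W2 upd_u.
    have [c1 c2] := oc_card oc.
    have e1 := card_N Hm ad'.
    have e2 := card_N Hm (Had u).
    move: lt; rewrite /W2plus /W2.
    set b' := #|_ :&: W11 d s u|.
    set b := #|_ :&: W11 d s u|.
    set a' := #|[set v in N' | _]|.
    set a := #|[set v in s u | _]| => lt.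
    have hlt : b'%:R + 1 <= b%:R :> R by rewrite natr1 ler_nat.
    have : (a = a' \/ a = a'.+1)%N by lia.
    have ea : (a'.+1%:R = a'%:R + 1 :> R) by rewrite natr1.
    case=> ->; rewrite ?ea ?mulrDr => hb; lra.
- case=> [[HA Hii _] Hmin] u S uS.
  have H1s : H1 d s u by move=> x w _; apply: HA.
  have Had : admissible d u (s u).
    apply/and3P; split; [exact: prof | | exact: Hii].
    by apply/forallP => v; apply/implyP => /eqP h; apply: HA.
  case ad' : (admissible d u S).
  + rewrite (cost_formula Hm alpha Z H1s Had).
    rewrite (cost_formula Hm alpha Z (H1_update S HA)) ?upd_u //.
    have := Hmin u S ad'; lra.
  + have uS' : u \notin update s u S u by rewrite upd_u.
    have nad : ~~ admissible d u (update s u S u) by rewrite upd_u ad'.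
    have [v vu e] := stretch_bad Hm Z (H1_update S HA) uS' nad.
    have h1 := cost_geZ (alpha:=alpha) Z0 a0' vu e.
    have h2 := cost_le Hm Z a0' H1s Had.
    lra.
Qed.
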